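(* Let $B>0$ and let $D_0$ be the outer disk bounded by the circle centered at $(0,0)$ of radius $1/B$ (so $D_0$ has curvature $-B$). Let $A$ be an inner disk of curvature $A>0$ tangent to $D_0$ (lying inside the circle), and let $$\mathbf a=\begin{bmatrix}m\\ n\end{bmatrix}=\mathrm{spin}(A,D_0).$$ Then $A=B+m^2+n^2$, the radius of $A$ is $1/A$, and its center is $$\left(\frac{m^2-n^2}{B(B+m^2+n^2)},\ \frac{2mn}{B(B+m^2+n^2)}\right).$$ Equivalently, in terms of the disk symbol (reduced center coordinates over curvature), $A$ is $\dfrac{(m^2-n^2)/B,\ 2mn/B}{m^2+n^2+B}$.
   Context: An inner disk of radius $r$ has curvature $1/r$ and signed radius $r$; the outer disk (exterior) of a circle of radius $r$ has curvature $-1/r$ and signed radius $-r$. Identify the plane with $\mathbb C$. For tangent disks $X,Y$ with centers $c_X,c_Y$ and signed radii $r_X,r_Y$, the tangency spinor is $\mathrm{spin}(X,Y)=\pm\sqrt{(c_Y-c_X)/(r_Xr_Y)}\in\mathbb C$, regarded as a vector in $\mathbb R^2$ (defined up to sign). The symbol of a disk of curvature $\beta$ centered at $(x,y)$ is $\frac{\dot x,\dot y}{\beta}$ with $\dot x=\beta x$, $\dot y=\beta y$. *)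

(* Defs.v *)
From HB Require Import structures.
From mathcomp Require Import all_boot all_order all_algebra.
From mathcomp Require Export complex.
Set Implicit Arguments. Unset Strict Implicit. Unset Printing Implicit Defensive.
Import Order.TTheory GRing.Theory Num.Theory.
Local Open Scope ring_scope.
Local Open Scope complex_scope.

(* A (generalized) disk in the plane, the plane identified with R[i]:
   its center and its signed radius (positive for an inner disk,
   negative for the outer disk = exterior of a circle). *)
Record disk (R : rcfType) := Disk { center : R[i]; sradius : R }.

Definition curvature (R : rcfType) (X : disk R) : R := (sradius X)^-1.

(* tangency of generalized disks: distance of centers = |r_X + r_Y|
   (external tangency for two inner disks, internal tangency of an inner
   disk with an outer disk). *)
Definition tangent (R : rcfType) (X Y : disk R) : Prop :=
  Normc.normc (center X - center Y) = `|sradius X + sradius Y|.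

(* (m,n) is a tangency spinor spin(X,Y) (defined up to sign):
   (m + i n)^2 = (c_Y - c_X) / (r_X r_Y). *)
Definition is_spin (R : rcfType) (X Y : disk R) (m n : R) : Prop :=
  (m +i* n) ^+ 2 = (center Y - center X) / (sradius X * sradius Y)%:C.

Definition outer_D0 (R : rcfType) (B : R) : disk R := Disk 0 (- B^-1).

(* Main.v *)
Require Import Defs.
From HB Require Import structures.
From mathcomp Require Import all_boot all_order all_algebra.
From mathcomp Require Import complex.
From mathcomp Require Import ring lra.
Import Order.TTheory GRing.Theory Num.Theory.
Local Open Scope ring_scope.
Local Open Scope complex_scope.

Theorem propositionA1 (R : rcfType) (B : R) (A : disk R) (m n : R) :
  0 < B ->
  0 < sradius A ->                       (* A is an inner disk *)
  sradius A <= B^-1 ->                   (* A lies inside the circle of radius 1/B *)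
  tangent A (outer_D0 B) ->
  is_spin A (outer_D0 B) m n ->
  curvature A = B + m ^+ 2 + n ^+ 2 /\
  sradius A = (curvature A)^-1 /\
  center A = ((m ^+ 2 - n ^+ 2) / (B * (B + m ^+ 2 + n ^+ 2)))
             +i* (2 * m * n / (B * (B + m ^+ 2 + n ^+ 2))).
Proof.
case: A => [[x y] r] /=; rewrite /tangent /is_spin /curvature /outer_D0 /=.
move=> B0 r0 rB Ht Hs.
set k := r * - B^-1.
have k0 : k != 0 by rewrite /k mulf_neq0 ?oppr_eq0 ?invr_eq0 // ?gt_eqF.
have kC : k%:C != 0 by rewrite eq_complex /= eqxx andbT.
have Hc : (m +i* n) ^+ 2 * k%:C = - (x +i* y).
  by rewrite Hs -/k divfK // sub0r.
move: Hc; rewrite expr2 => -[Hx Hy].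
rewrite !subr0 in Ht.
have ex : x = - ((m * m - n * n) * k) by rewrite -[x]opprK -Hx; ring.
have ey : y = - ((m * n + n * m) * k) by rewrite -[y]opprK -Hy; ring.
set s := m ^+ 2 + n ^+ 2.
have s0 : 0 <= s by rewrite /s addr_ge0 // sqr_ge0.
rewrite (_ : _ + _ = (s * (r / B)) ^+ 2) in Ht; last by rewrite ex ey /k /s; ring.
rewrite sqrtr_sqr in Ht.
rewrite [X in X = _]ger0_norm in Ht; last by rewrite mulr_ge0 // divr_ge0 // ltW.
rewrite ler0_norm in Ht; last by rewrite subr_le0.
have B0' : B != 0 by rewrite gt_eqF.
have H1 : r * (B + s) = 1.
  have : r * (B + s) - 1 = B * (s * (r / B) - - (r - B^-1)) by field.
  by rewrite Ht subrr mulr0 => /eqP; rewrite subr_eq0 => /eqP.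
have Bs0 : B + s != 0 by rewrite gt_eqF // ltr_wpDr.
have er : r = (B + s)^-1 by apply: (mulIf Bs0); rewrite H1 mulVf.
rewrite -addrA -/s er invrK; split => //; split => //.
rewrite ex ey /k er; congr (_ +i* _); rewrite /s; field; rewrite -/s; exact/andP.
Qed.
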